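(* Let $X\subseteq U$ be a fixed set of $|X|=m$ keys and let $h:U\to[n]$ be a simple tabulation hash function. Then $$\frac{\bigl|\mathbb{E}[|h(X)|]-\mu_0\bigr|}{\mu_0}=\tilde O(n^{-1/c}).$$
   Context: Simple tabulation hashing: the key universe is $U=[u]$, each key $x\in U$ is viewed as a vector $(x[0],\dots,x[c-1])$ of $c=O(1)$ characters from $\Sigma=[u^{1/c}]$; the range is $[n]=[2^r]$. $h(x)=h_0(x[0])\oplus\cdots\oplus h_{c-1}(x[c-1])$ with $h_0,\dots,h_{c-1}:\Sigma\to[2^r]$ independent fully random functions and $\oplus$ bitwise XOR. $\mu_0=n(1-(1-1/n)^m)$. $\tilde O$ hides polylogarithmic factors in $n$; the constant $c$ is fixed. *)

(* Defs.v *)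
From mathcomp Require Import all_boot all_order all_algebra.
From mathcomp Require Import reals exp.
Set Implicit Arguments. Unset Strict Implicit. Unset Printing Implicit Defensive.
Import Order.TTheory GRing.Theory Num.Theory.
Local Open Scope ring_scope.

(* A key of U = [sigma^c] viewed as a vector of c characters in Sigma = [sigma]. *)
Definition key (c sigma : nat) := {ffun 'I_c -> 'I_sigma}.

(* A hash value in [n] = [2^r], represented by its r bits. *)
Definition hval (r : nat) := {ffun 'I_r -> bool}.

Definition xorv (r : nat) (a b : hval r) : hval r := [ffun j => a j (+) b j].

Definition tabfun (c sigma r : nat) := {ffun 'I_c -> {ffun 'I_sigma -> hval r}}.

Definition tab_hash (c sigma r : nat) (T : tabfun c sigma r) (x : key c sigma)
  : hval r := \big[@xorv r/[ffun => false]]_(i < c) T i (x i).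

(* E[|h(X)|] where the tables are independent, fully random
   (uniform over all tabulation functions). *)
Definition exp_image (R : realType) (c sigma r : nat) (X : {set key c sigma}) : R :=
  (\sum_(T : tabfun c sigma r) (#|[set tab_hash T x | x in X]|)%:R)
    / (#|{: tabfun c sigma r}|)%:R.

Definition mu0 (R : realType) (n m : nat) : R :=
  n%:R * (1 - (1 - n%:R^-1) ^+ m).

(* Main.v *)
Require Import Defs.
From mathcomp Require Import all_boot all_order all_algebra.
From mathcomp Require Import reals exp.
From mathcomp Require Import zify ring lra.
Set Implicit Arguments. Unset Strict Implicit. Unset Printing Implicit Defensive.
Import Order.TTheory GRing.Theory Num.Theory.


Lemma sum_constT (I : finType) k : \sum_(i : I) k = #|I| * k.
Proof. by rewrite sum_nat_const. Qed.

Lemma card_sep (T : finType) (A : {set T}) (P : pred T) :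
  #|[set x in A | P x]| = \sum_(x in A) P x.
Proof.
rewrite -sum1_card [RHS](eq_bigr (fun x => if P x then 1 else 0)); last by move=> x _; case: (P x).
by rewrite -big_mkcondr; apply: eq_bigl => x; rewrite inE.
Qed.

Lemma cardsUD' (T : finType) (A B : {set T}) : #|A :|: B| = #|A| + #|B :\: A|.
Proof.
by rewrite -(cardsID A (A :|: B)) setUK setDUl setDv set0U.
Qed.

Definition pairs (T U : finType) (f : T -> U) (A : {set T}) :=
  #|[set p : T * T | [&& p.1 \in A, p.2 \in A, p.1 != p.2 & f p.1 == f p.2]]|.

Lemma pairsS (T U : finType) (f : T -> U) (A B : {set T}) :
  A \subset B -> pairs f A <= pairs f B.
Proof.
move=> /subsetP AB; apply: subset_leq_card; apply/subsetP => p.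
rewrite !inE => /and4P [h1 h2 h3 h4]; by rewrite AB // AB // h3 h4.
Qed.

Lemma card_le_img_pairs (T U : finType) (f : T -> U) (A : {set T}) :
  #|A| <= #|f @: A| + pairs f A.
Proof.
elim: {A}_.+1 {-2}A (ltnSn #|A|) => // N IH A hA.
case: (set_0Vmem A) => [->|[x xA]]; first by rewrite cards0.
pose A' := A :\ x.
have A'A : A' \subset A by apply: subD1set.
have cA : #|A| = #|A'|.+1 by rewrite (cardsD1 x A) xA.
have IH' : #|A'| <= #|f @: A'| + pairs f A' by apply: IH; rewrite -ltnS -cA.
have fS : #|f @: A'| <= #|f @: A| by apply/subset_leq_card/imsetS.
have pS := pairsS f A'A.
case fx: (f x \in f @: A').
- case/imsetP: fx => y yA' fxy.
  have : pairs f A' < pairs f A.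
    apply: proper_card; apply/properP; split.
      apply/subsetP => p; rewrite !inE => /and4P [h1 h2 h3 h4].
      move: h1 h2 => /andP[_ ->] /andP[_ ->]; by rewrite h3 h4.
    move: yA'; rewrite !inE => /andP [yx yA].
    exists (x, y).
      by rewrite !inE /= xA yA eq_sym yx fxy eqxx.
    by rewrite !inE /= eqxx.
  move=> hp; rewrite cA; lia.
- have : #|f @: A'| < #|f @: A|.
    apply: proper_card; apply/properP; split; first exact: imsetS.
    by exists (f x); [apply: imset_f | rewrite fx].
  move=> hi; rewrite cA; lia.
Qed.

Section Tab.
Variables (c sigma r : nat).
Local Notation K := (key c sigma).
Local Notation TF := (tabfun c sigma r).
Local Notation HV := (hval r).

Lemma card_hv : #|{: HV}| = 2 ^ r.
Proof. by rewrite card_ffun card_bool card_ord. Qed.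

Definition img (T : TF) (Z : {set K}) : {set HV} := [set tab_hash T x | x in Z].

Lemma bit_hash (T : TF) (x : K) (j : 'I_r) : tab_hash T x j = \big[addb/false]_(l < c) T l (x l) j.
Proof.
rewrite /tab_hash.
apply: (big_morph (fun h : HV => h j) (id1 := false) (op1 := addb)).
  by move=> a b; rewrite ffunE.
by rewrite ffunE.
Qed.

Definition shiftT (i : 'I_c) (a : 'I_sigma) (v : HV) (T : TF) : TF :=
  [ffun l => if l == i then [ffun s => if s == a then xorv (T l s) v else T l s] else T l].

Lemma shiftK (i : 'I_c) (a : 'I_sigma) (v : HV) : involutive (shiftT i a v).
Proof.
move=> T; apply/ffunP => l; rewrite !ffunE; case: eqP => // _.
apply/ffunP => s; rewrite !ffunE; case: eqP => // _.
by apply/ffunP => j; rewrite !ffunE addbK.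
Qed.

Lemma hash_shift_other (i : 'I_c) (a : 'I_sigma) (v : HV) (T : TF) (y : K) : y i != a ->
  tab_hash (shiftT i a v T) y = tab_hash T y.
Proof.
move=> hy; apply: eq_bigr => l _; rewrite ffunE; case: eqP => [->|//].
by rewrite ffunE (negbTE hy).
Qed.

Lemma hash_shift_x (i : 'I_c) (a : 'I_sigma) (v : HV) (T : TF) (x : K) : x i = a ->
  tab_hash (shiftT i a v T) x = xorv (tab_hash T x) v.
Proof.
move=> hx; apply/ffunP => j; rewrite ffunE !bit_hash (bigD1 i) //= [in RHS](bigD1 i) //=.
rewrite ffunE eqxx ffunE hx eqxx ffunE.
rewrite (eq_bigr (fun l => T l (x l) j)); last first.
  by move=> l /negbTE hl; rewrite ffunE hl.
by rewrite -!addbA (addbC (v j)).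
Qed.

Lemma xorvKl (a v : HV) : xorv a (xorv a v) = v.
Proof. by apply/ffunP => j; rewrite !ffunE addKb. Qed.

Lemma xorv_inj (a : HV) : injective (xorv a).
Proof. exact: (can_inj (xorvKl a)). Qed.

Lemma F1 (i : 'I_c) (x : K) (Z : {set K}) : (forall y, y \in Z -> y i != x i) ->
  (2 ^ r * \sum_(T : TF) (tab_hash T x \notin img T Z))%N =
  \sum_(T : TF) (2 ^ r - #|img T Z|)%N.
Proof.
move=> hZ.
have step v : \sum_(T : TF) (tab_hash T x \notin img T Z) =
              \sum_(T : TF) (xorv (tab_hash T x) v \notin img T Z).
  rewrite (reindex_inj (inv_inj (shiftK i (x i) v))) /=.
  apply: eq_bigr => T _; rewrite hash_shift_x //.
  have -> : img (shiftT i (x i) v T) Z = img T Z.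
    by rewrite /img; apply: eq_in_imset => y /hZ hy; exact: hash_shift_other.
  by [].
rewrite -card_hv -sum_nat_const (eq_bigr _ (fun v _ => step v)) exchange_big /=.
apply: eq_bigr => T _.
rewrite (reindex_inj (@xorv_inj (tab_hash T x))) /=.
rewrite (eq_bigr (fun v => v \notin img T Z : nat)); last by move=> v _; rewrite xorvKl.
rewrite -big_mkcond /= sum1_card.
have := cardC (mem (img T Z)); rewrite /= => <-.
by rewrite -addnBAC // subnn.
Qed.

Lemma F2 (x y : K) : x != y ->
  (2 ^ r * \sum_(T : TF) (tab_hash T x == tab_hash T y))%N = #|TF|.
Proof.
move=> xy.
have [i hi] : exists i, y i != x i.
  case: (pickP (fun i => y i != x i)) => [i hi|h]; first by exists i.
  move/negP: xy; case; apply/eqP/ffunP => i; move: (h i) => /negbFE/eqP ->.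
  by [].
have h1 : forall y0, y0 \in [set y] -> y0 i != x i by move=> z; rewrite inE => /eqP ->.
have H1 := @F1 i x [set y] h1.
have e1 : \sum_(T : TF) (2 ^ r - #|img T [set y]|) = (#|TF| * (2 ^ r - 1))%N.
  rewrite -(sum_constT TF); apply: eq_bigr => T _; by rewrite /img imset_set1 cards1.
have e2 : \sum_(T : TF) (tab_hash T x \notin img T [set y]) =
          \sum_(T : TF) ~~ (tab_hash T x == tab_hash T y).
  by apply: eq_bigr => T _; rewrite /img imset_set1 inE.
rewrite e1 e2 in H1.
have hs : (\sum_(T : TF) (tab_hash T x == tab_hash T y) + \sum_(T : TF) ~~ (tab_hash T x == tab_hash T y) = #|TF|)%N.
  rewrite -big_split /= -[#|TF|]muln1 -sum_constT; apply: eq_bigr => T _; by case: (_ == _).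
have n1 : (1 <= 2 ^ r)%N by rewrite expn_gt0.
move: hs H1; set A := \sum_(T : TF) _; set B := \sum_(T : TF) _ => hs hB.
nia.
Qed.

Lemma stepT (T : TF) (Z : {set K}) (i : 'I_c) (a : 'I_sigma) :
  let G := [set x in Z | x i == a] in let Z' := [set x in Z | x i != a] in
  let A := [set x in G | tab_hash T x \notin img T Z'] in
  [/\ #|img T Z| = (#|img T Z'| + #|img T G :\: img T Z'|)%N,
      #|img T G :\: img T Z'| <= #|A| &
      #|A| <= #|img T G :\: img T Z'| + pairs (tab_hash T) G].
Proof.
move=> G Z' A.
have hZ : Z = Z' :|: G.
  apply/setP => x; rewrite !inE; by case: (x i == a); rewrite ?andbT ?andbF ?orbF.
have hsub : img T G :\: img T Z' \subset img T A.
  apply/subsetP => z; rewrite inE => /andP [nz /imsetP [x xG zx]].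
  rewrite zx in nz *; apply: imset_f; by rewrite /A inE xG nz.
have hsub2 : img T A \subset img T G :\: img T Z'.
  apply/subsetP => z /imsetP [x]; rewrite inE => /andP [xG nx] ->.
  by rewrite inE nx; apply: imset_f.
split.
- by rewrite {1}hZ /img imsetU cardsUD'.
- apply: leq_trans (subset_leq_card hsub) _; exact: leq_imset_card.
- apply: leq_trans (card_le_img_pairs (tab_hash T) A) _.
  apply: leq_add; first exact: subset_leq_card.
  apply: pairsS; apply/subsetP => x; rewrite inE; by case/andP.
Qed.

End Tab.


Section Sums.
Variables (c sigma r : nat).
Local Notation K := (key c sigma).
Local Notation TF := (tabfun c sigma r).
Local Notation HV := (hval r).

Definition SS (Z : {set K}) := \sum_(T : TF) #|img T Z|.

Lemma img_le (T : TF) (Z : {set K}) : #|img T Z| <= 2 ^ r.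
Proof. by rewrite -(card_hv r) max_card. Qed.

Lemma sumA (Z : {set K}) (i : 'I_c) (a : 'I_sigma) :
  let G := [set x in Z | x i == a] in let Z' := [set x in Z | x i != a] in
  (2 ^ r * \sum_(T : TF) #|[set x in G | tab_hash T x \notin img T Z']|)%N =
  (#|G| * \sum_(T : TF) (2 ^ r - #|img T Z'|))%N.
Proof.
move=> G Z'.
rewrite (eq_bigr (fun T => \sum_(x in G) (tab_hash T x \notin img T Z') : nat)); last first.
  by move=> T _; rewrite card_sep.
rewrite exchange_big /= big_distrr /= -sum_nat_const.
apply: eq_bigr => x xG; apply: (@F1 _ _ r i) => y.
move: xG; rewrite !inE => /andP [_ /eqP hx] /andP [_ hy]; by rewrite hx.
Qed.

Lemma sumP (G : {set K}) :
  (2 ^ r * \sum_(T : TF) pairs (tab_hash T) G + #|G| * #|TF| = #|G| * #|G| * #|TF|)%N.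
Proof.
pose D := [set p : K * K | [&& p.1 \in G, p.2 \in G & p.1 != p.2]].
have hp (T : TF) : pairs (tab_hash T) G = \sum_(p in D) (tab_hash T p.1 == tab_hash T p.2).
  rewrite /pairs -card_sep; apply: eq_card => p; by rewrite !inE !andbA.
rewrite (eq_bigr _ (fun T _ => hp T)) exchange_big /= big_distrr /=.
rewrite (eq_bigr (fun _ => #|TF|)); last first.
  by move=> p; rewrite inE => /and3P [_ _ h]; apply: F2.
rewrite sum_nat_const -mulnDl.
congr (_ * _)%N.
pose dg := [set (x, x) | x in G].
have hd : #|dg| = #|G| by apply: card_imset => x y [].
have hs : dg \subset setX G G.
  by apply/subsetP => p /imsetP [x xG ->]; rewrite inE /= xG.
have := cardsID dg (setX G G).
rewrite (setIidPr hs) hd cardsX => <-.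
rewrite addnC; congr (_ + _)%N; apply: eq_card => p.
rewrite !inE; case: p => [x y] /=.
case: (x =P y) => [->|nxy] /=.
  case yG: (y \in G); rewrite ?andbF //=.
  by have -> : (y, y) \in dg by apply: imset_f.
have -> : (x, y) \notin dg.
  by apply/imsetP => -[z _ [hx hy]]; apply: nxy; rewrite hx hy.
by rewrite andbT.
Qed.

End Sums.

Section Real.
Variables (R : realType) (c sigma r : nat).
Local Notation K := (key c sigma).
Local Notation TF := (tabfun c sigma r).
Local Open Scope ring_scope.

Definition PrZ (Z : {set K}) : R := 1 - (SS r Z)%:R / ((2 ^ r)%:R * #|TF|%:R).

Lemma cardTF_gt0 : (0 < #|TF|)%N.
Proof. by apply/card_gt0P; exists [ffun _ => [ffun _ => [ffun _ => false]]]. Qed.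

Lemma step_real (Z : {set K}) (i : 'I_c) (a : 'I_sigma) :
  let G := [set x in Z | x i == a] in let Z' := [set x in Z | x i != a] in
  let k := #|G| in
  PrZ Z' * (1 - k%:R / (2 ^ r)%:R) <= PrZ Z /\
  PrZ Z <= PrZ Z' * (1 - k%:R / (2 ^ r)%:R) + (k%:R * (k%:R - 1)) / ((2 ^ r)%:R ^+ 2).
Proof.
move=> G Z' k.
set SD := (\sum_(T : TF) #|img T G :\: img T Z'|)%N.
set SA := (\sum_(T : TF) #|[set x in G | tab_hash T x \notin img T Z']|)%N.
set SP := (\sum_(T : TF) pairs (tab_hash T) G)%N.
have e1 : SS r Z = (SS r Z' + SD)%N.
  by rewrite /SS -big_split; apply: eq_bigr => T _; case: (stepT T Z i a).
have l1 : (SD <= SA)%N by apply: leq_sum => T _; case: (stepT T Z i a).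
have l2 : (SA <= SD + SP)%N.
  by rewrite -big_split; apply: leq_sum => T _; case: (stepT T Z i a).
have eA := sumA r Z i a.
set W := (\sum_(T : TF) (2 ^ r - #|img T Z'|))%N in eA.
have eS : (W + SS r Z' = 2 ^ r * #|TF|)%N.
  rewrite /W /SS -big_split /= mulnC -sum_constT; apply: eq_bigr => T _.
  by rewrite subnK // img_le.
have eP := sumP r G.
set n : R := (2 ^ r)%:R.
set N : R := #|TF|%:R.
have n0 : 0 < n by rewrite ltr0n expn_gt0.
have N0 : 0 < N by rewrite ltr0n cardTF_gt0.
have E1 : (SS r Z)%:R = (SS r Z')%:R + SD%:R :> R by rewrite e1 natrD.
have L1 : SD%:R <= SA%:R :> R by rewrite ler_nat.
have L2 : SA%:R <= SD%:R + SP%:R :> R by rewrite -natrD ler_nat.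
have EA : n * SA%:R = k%:R * W%:R :> R by rewrite -!natrM eA.
have ES : W%:R = n * N - (SS r Z')%:R :> R.
  by apply/eqP; rewrite eq_sym subr_eq -natrD eS natrM.
have EP : n * SP%:R + k%:R * N = k%:R * k%:R * N :> R.
  by rewrite -!natrM -natrD eP.
rewrite /PrZ E1 -/n -/N.
set u := (SS r Z')%:R / (n * N).
set v := SD%:R / (n * N).
set w := SA%:R / (n * N).
set q := SP%:R / (n * N).
have hw : w = k%:R / n * (1 - u).
  have : SA%:R = k%:R * (n * N - (SS r Z')%:R) / n.
    by rewrite -ES -EA mulrC mulKf // gt_eqF.
  move=> hSA; rewrite /w /u hSA; field.
  by rewrite gt_eqF // gt_eqF.
have hq : q = (k%:R * (k%:R - 1)) / n ^+ 2.
  have : SP%:R = (k%:R * k%:R * N - k%:R * N) / n.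
    by rewrite -EP addrK mulrC mulKf // gt_eqF.
  move=> hSP; rewrite /q hSP; field.
  by rewrite gt_eqF // gt_eqF.
have hv : v <= w by rewrite /v /w ler_pM2r // invr_gt0 mulr_gt0.
have hwq : w <= v + q by rewrite /v /w /q -mulrDl ler_pM2r // invr_gt0 mulr_gt0.
have -> : ((SS r Z')%:R + SD%:R) / (n * N) = u + v by rewrite mulrDl.
rewrite -hq.
split.
- suff : v <= w by rewrite hw; nra.
  exact: hv.
- move: hwq; rewrite hw; nra.
Qed.

End Real.


Section Select.
Variables (c sigma : nat).
Local Notation K := (key c sigma).

Lemma card_le_prod (Z : {set K}) :
  (#|Z| <= \prod_(i < c) #|[set x i | x : K in Z]|)%N.
Proof.
have -> : (\prod_(i < c) #|[set x i | x : K in Z]| =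
    #|(family (fun i : 'I_c => mem [set x i | x : K in Z]) : simpl_pred K)|)%N.
  by rewrite card_family foldrE big_map big_enum.
apply: subset_leq_card; apply/subsetP => x xZ.
apply/familyP => i; exact: imset_f.
Qed.

Lemma select (Z : {set K}) : (0 < c)%N -> Z != set0 ->
  exists i : 'I_c, exists a : 'I_sigma,
    (0 < #|[set x in Z | x i == a]|)%N /\
    (#|[set x in Z | x i == a]| ^ c <= #|Z| ^ c.-1)%N.
Proof.
move=> hc /set0Pn [x0 x0Z].
pose i0 := Ordinal hc.
pose cnt (p : 'I_c * 'I_sigma) := #|[set x in Z | x p.1 == p.2]|.
have P0 : (0 < cnt (i0, x0 i0))%N.
  by apply/card_gt0P; exists x0; rewrite inE x0Z eqxx.
case: (@arg_minnP _ (i0, x0 i0) (fun p => (0 < cnt p)%N) cnt P0) => [[i a] Ppm Hmin].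
exists i, a; split => //.
set k := cnt (i, a) in Ppm Hmin *.
rewrite -/(cnt (i, a)) -/k.
have hD (j : 'I_c) : (#|[set x j | x : K in Z]| * k <= #|Z|)%N.
  have -> : #|Z| = (\sum_(b in [set x j | x : K in Z]) cnt (j, b))%N.
    rewrite -sum1_card (partition_big (fun x : K => x j) (mem [set x j | x : K in Z])) /=; last first.
      by move=> x xZ; apply: imset_f.
    apply: eq_bigr => b _; rewrite /cnt -sum1_card; apply: eq_bigl => x.
    by rewrite inE.
  rewrite -sum_nat_const; apply: leq_sum => b /imsetP [x xZ ->].
  apply: Hmin; apply/card_gt0P; exists x; by rewrite inE xZ eqxx.
have Zpos : (0 < #|Z|)%N by apply/card_gt0P; exists x0.
have h1 : (#|Z| * k ^ c <= #|Z| ^ c)%N.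
  apply: (@leq_trans ((\prod_(j < c) #|[set x j | x : K in Z]|) * k ^ c)%N).
    by apply: leq_mul => //; apply: card_le_prod.
  have -> : (k ^ c = \prod_(j < c) k)%N by rewrite prod_nat_const card_ord.
  have -> : (#|Z| ^ c = \prod_(j < c) #|Z|)%N by rewrite prod_nat_const card_ord.
  rewrite -big_split /=.
  by apply: leq_prod => j _; apply: hD.
have e : (#|Z| ^ c = #|Z| * #|Z| ^ c.-1)%N by rewrite -expnS prednK.
by rewrite e leq_pmul2l in h1.
Qed.

End Select.

Local Open Scope ring_scope.


Section Ana.
Variable R : realType.

Lemma kk_ge0 (k : nat) : 0 <= k%:R * (k%:R - 1) :> R.
Proof.
case: k => [|k]; first by rewrite mul0r.
by rewrite mulr_ge0 // subr_ge0 ler1n.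
Qed.

Lemma bern (x : R) (k : nat) : 0 <= x -> x <= 1 -> 1 - k%:R * x <= (1 - x) ^+ k.
Proof.
move=> x0 x1; elim: k => [|k IH]; first by rewrite mul0r subr0 expr0.
rewrite exprS.
have h := ler_wpM2l (_ : 0 <= 1 - x) IH.
have hx : 0 <= 1 - x by rewrite subr_ge0.
move: (h hx); rewrite -natr1.
have : 0 <= k%:R * x ^+ 2 by rewrite mulr_ge0 // exprn_ge0.
nra.
Qed.

Lemma bonf (x : R) (k : nat) : 0 <= x -> x <= 1 ->
  (1 - x) ^+ k <= 1 - k%:R * x + (k%:R * (k%:R - 1) / 2) * x ^+ 2.
Proof.
move=> x0 x1; elim: k => [|k IH]; first by rewrite !mul0r subr0 addr0 expr0.
rewrite exprS.
have hx : 0 <= 1 - x by rewrite subr_ge0.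
have h := ler_wpM2l hx IH.
have hk := kk_ge0 k.
have : 0 <= (k%:R * (k%:R - 1) / 2) * x ^+ 3.
  by rewrite mulr_ge0 // ?exprn_ge0 // divr_ge0.
move=> h3; rewrite -natr1.
have e : 1 - (k%:R + 1) * x + ((k%:R + 1) * (k%:R + 1 - 1) / 2) * x ^+ 2 =
  (1 - x) * (1 - k%:R * x + (k%:R * (k%:R - 1) / 2) * x ^+ 2) +
  (k%:R * (k%:R - 1) / 2) * x ^+ 3 :> R by field.
lra.
Qed.

End Ana.

Section Core.
Variables (R : realType) (c sigma r : nat).
Hypothesis hc : (0 < c)%N.
Local Notation K := (key c sigma).
Local Notation TF := (tabfun c sigma r).

Lemma PrZ0 : PrZ R r (set0 : {set K}) = 1.
Proof.
rewrite /PrZ /SS big1 ?mul0r ?subr0 // => T _.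
by rewrite /img imset0 cards0.
Qed.

Lemma core (b : nat) : (b <= 2 ^ r)%N -> forall Z : {set K},
  (forall k, (k ^ c <= #|Z| ^ c.-1)%N -> (k <= b)%N) ->
  `|PrZ R r Z - (1 - ((2 ^ r)%:R)^-1) ^+ #|Z| | <= (b * #|Z|)%:R / ((2 ^ r)%:R ^+ 2).
Proof.
move=> hb Z; elim: {Z}_.+1 {-2}Z (ltnSn #|Z|) => // N IH Z hZ hk.
case: (eqVneq Z set0) => [->|Zn0].
  by rewrite PrZ0 cards0 expr0 subrr normr0 muln0 mul0r.
case: (select hc Zn0) => i [a [kpos kle]].
have [hl hu] := step_real R r Z i a.
move: hl hu.
set G := [set x in Z | x i == a] in kpos kle *.
set Z' := [set x in Z | x i != a].
set k := #|G| in kpos kle *.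
move=> hl hu.
have hcard : #|Z| = (#|Z'| + k)%N.
  have e1 : Z :\: [set x : K | x i == a] = Z' by apply/setP => x; rewrite !inE andbC.
  have e2 : Z :&: [set x : K | x i == a] = G by apply/setP => x; rewrite !inE.
  by rewrite -(cardsID [set x : K | x i == a] Z) e1 e2 addnC.
have kb : (k <= b)%N by apply: hk.
have IH' := IH Z'.
have hZ' : (#|Z'| < N)%N by rewrite -ltnS; apply: leq_trans hZ; rewrite hcard ltnS -addn1 leq_add2l.
have hk' : forall k0, (k0 ^ c <= #|Z'| ^ c.-1)%N -> (k0 <= b)%N.
  move=> k0 h0; apply: hk; apply: leq_trans h0 _.
  case: (c.-1) => [|e]; first by rewrite !expn0.
  by rewrite leq_exp2r // hcard leq_addr.
move: (IH' hZ' hk') => {IH IH' hk'}.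
rewrite hcard exprD.
set n : R := (2 ^ r)%:R.
set P := PrZ R r Z in hl hu *.
set P' := PrZ R r Z' in hl hu *.
set m' := #|Z'|.
set x := n^-1.
have n1 : 1 <= n by rewrite ler1n expn_gt0.
have n0 : 0 < n by apply: lt_le_trans n1.
have x0 : 0 <= x by rewrite invr_ge0 ltW.
have x1 : x <= 1 by rewrite invr_le1 // unitf_gt0.
have ex2 : forall y : R, y / n ^+ 2 = y * x ^+ 2 by move=> y; rewrite exprVn.
rewrite !ex2 in hu *.
have ekn : k%:R / n = k%:R * x by [].
rewrite ekn in hl hu.
set Q' := (1 - x) ^+ m'.
set y := (1 - x) ^+ k.
set t := 1 - k%:R * x.
have kn : k%:R <= n by rewrite ler_nat (leq_trans kb hb).
have t0 : 0 <= t by rewrite /t subr_ge0 -ekn ler_pdivrMr // mul1r.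
have t1 : t <= 1 by rewrite /t lerBlDr lerDl mulr_ge0.
have ty : t <= y by apply: bern.
have yt : y <= t + (k%:R * (k%:R - 1) / 2) * x ^+ 2 by apply: bonf.
have Q0 : 0 <= Q' by rewrite exprn_ge0 // subr_ge0.
have Q1 : Q' <= 1 by apply: exprn_ile1; [rewrite subr_ge0 | rewrite lerBlDr lerDl].
have kk0 := kk_ge0 R k.
have kkb : k%:R * (k%:R - 1) <= b%:R * k%:R :> R.
  rewrite mulrC ler_wpM2r //; rewrite lerBlDr natr1 ler_nat.
  exact: leqW.
have xx0 : 0 <= x ^+ 2 by rewrite exprn_ge0.
set d := k%:R * (k%:R - 1) * x ^+ 2 in hu *.
have d0 : 0 <= d by rewrite mulr_ge0.
have dh : (k%:R * (k%:R - 1) / 2) * x ^+ 2 <= d.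
  rewrite /d ler_wpM2r //; rewrite ler_pdivrMr // ler_peMr //; lra.
have db : d <= b%:R * k%:R * x ^+ 2 by rewrite /d ler_wpM2r.
set e' := (b * m')%:R * x ^+ 2.
have e0 : 0 <= e' by rewrite mulr_ge0.
move=> IHa; move: IHa; rewrite ler_norml => /andP [IHl IHu].
have h1 : P' * t <= (Q' + e') * t by rewrite ler_wpM2r //; lra.
have h2 : (Q' - e') * t <= P' * t by rewrite ler_wpM2r //; lra.
have h3 : e' * t <= e' by rewrite -[leRHS]mulr1 ler_wpM2l.
have h4 : Q' * t <= Q' * y by rewrite ler_wpM2l.
have h5 : Q' * y <= Q' * t + Q' * ((k%:R * (k%:R - 1) / 2) * x ^+ 2).
  by rewrite -mulrDr ler_wpM2l.
have h6 : Q' * ((k%:R * (k%:R - 1) / 2) * x ^+ 2) <= d.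
  apply: le_trans dh; rewrite ler_piMl // mulr_ge0 // divr_ge0 //.
have eb : (b * (m' + k))%:R * x ^+ 2 = e' + b%:R * k%:R * x ^+ 2.
  by rewrite /e' natrM natrD natrM; ring.
rewrite -/t in hl hu; rewrite eb ler_norml; apply/andP; split; lra.
Qed.

End Core.



Section RealFacts.
Variables (R : realType) (c' r : nat).
Local Notation c := c'.+1.
Local Notation n := ((2 ^ r)%:R : R).
Local Notation x := (((2 ^ r)%:R : R)^-1).
Local Notation Q m := ((1 - ((2 ^ r)%:R : R)^-1) ^+ m).
Local Notation w := (powR ((2 ^ r)%:R : R) (- (c%:R)^-1)).

Lemma n_ge1 : 1 <= n. Proof. by rewrite ler1n expn_gt0. Qed.
Lemma n_gt0 : 0 < n. Proof. exact: lt_le_trans n_ge1. Qed.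
Lemma x_ge0 : 0 <= x. Proof. by rewrite invr_ge0 ltW // n_gt0. Qed.
Lemma x_le1 : x <= 1. Proof. by rewrite invf_le1 ?n_ge1 // n_gt0. Qed.
Lemma x_gt0 : 0 < x. Proof. by rewrite invr_gt0 n_gt0. Qed.

Lemma w_gt0 : 0 < w. Proof. by apply: powR_gt0; exact: n_gt0. Qed.

Lemma w_exp : w ^+ c = x.
Proof.
rewrite -powR_mulrn; last exact: ltW w_gt0.
rewrite -powRrM mulNr mulVf ?pnatr_eq0 //.
by rewrite powR_inv1 // ltW // n_gt0.
Qed.

Lemma pow_le (u v : R) : 0 <= u -> 0 <= v -> u ^+ c <= v ^+ c -> u <= v.
Proof. by move=> u0 v0; rewrite (ler_pXn2r (n:=c)) // nnegrE. Qed.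

Lemma x_le_w : x <= w.
Proof.
apply: pow_le; [exact: x_ge0 | exact: ltW w_gt0 |].
rewrite w_exp exprS -[leRHS]mulr1 ler_wpM2l ?x_ge0 //.
by apply: exprn_ile1; [exact: x_ge0 | exact: x_le1].
Qed.

Lemma Q_ge0 m : 0 <= Q m.
Proof. by rewrite exprn_ge0 // subr_ge0 x_le1. Qed.

Lemma Q_le1 m : Q m <= 1.
Proof. by apply: exprn_ile1; rewrite ?subr_ge0 ?x_le1 // lerBlDr lerDl x_ge0. Qed.

Lemma Q_mono m1 m2 : (m1 <= m2)%N -> Q m2 <= Q m1.
Proof.
move=> h.
have a0 : 0 <= 1 - x by rewrite subr_ge0 x_le1.
have a1 : 1 - x <= 1 by rewrite lerBlDr lerDl x_ge0.
exact: (ler_wiXn2l a0 a1 h).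
Qed.

Lemma Q_small m : (m <= 2 ^ r)%N -> m%:R * x / 2 <= 1 - Q m.
Proof.
move=> hm.
have := bonf m x_ge0 x_le1.
have hmx : m%:R * x <= 1 by rewrite ler_pdivrMr ?n_gt0 // mul1r ler_nat.
have x0 := x_ge0.
have hmn : (m%:R - 1) * x <= 1 by lra.
have h0 : 0 <= m%:R * x by rewrite mulr_ge0 ?x_ge0.
have := ler_wpM2l h0 hmn.
lra.
Qed.

Lemma Q_half m : (2 ^ r <= m)%N -> Q m <= 2^-1.
Proof.
move=> hm; apply: le_trans (Q_mono hm) _.
have := bonf (2 ^ r) x_ge0 x_le1.
have nz : n != 0 by rewrite lt0r_neq0 // n_gt0.
have e : (2 ^ r)%:R * x = 1 :> R by rewrite mulfV.
have e2 : ((2 ^ r)%:R * ((2 ^ r)%:R - 1) / 2) * x ^+ 2 = (1 - x) / 2 :> R.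
  by field.
have x0 := x_ge0.
lra.
Qed.

Lemma Q_big : Q (2 ^ r * r.+1) <= x / 2.
Proof.
rewrite exprM.
have h := Q_half (leqnn (2 ^ r)).
apply: (@le_trans _ _ ((2^-1) ^+ r.+1)).
  apply: lerXn2r => //; rewrite nnegrE ?Q_ge0 //.
  by rewrite invr_ge0.
rewrite exprS mulrC natrX -exprVn.
by [].
Qed.

Lemma t_ge1 : 1 <= (r.+1)%:R :> R.
Proof. by rewrite ler1n. Qed.

End RealFacts.

Lemma leq_expb (a b e : nat) : (a <= b)%N -> (a ^ e <= b ^ e)%N.
Proof. by case: e => [|e] h; [rewrite !expn0 | rewrite leq_exp2r]. Qed.

Lemma nat_caseB (r c' b m : nat) : (2 ^ r < b)%N -> (b ^ c'.+1 <= m ^ c')%N ->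
  (m <= 2 ^ r * r.+1)%N -> (2 ^ r < r.+1 ^ c')%N.
Proof.
move=> hb hbm hm.
have e1 : ((2 ^ r).+1 ^ c'.+1 <= b ^ c'.+1)%N by apply: leq_expb.
have e2 : (m ^ c' <= (2 ^ r * r.+1) ^ c')%N by apply: leq_expb.
have h1 := leq_trans e1 (leq_trans hbm e2).
rewrite expnMn in h1.
have p0 : (0 < (2 ^ r) ^ c')%N by rewrite !expn_gt0.
have h2 : ((2 ^ r) ^ c' * 2 ^ r < (2 ^ r).+1 ^ c'.+1)%N.
  rewrite expnSr; apply: (@leq_trans ((2 ^ r) ^ c' * (2 ^ r).+1)%N).
    by rewrite ltn_pmul2l.
  by rewrite leq_mul2r leq_expb ?orbT.
have := leq_trans h2 h1.
by rewrite ltn_pmul2l.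
Qed.

Section Main.
Variables (R : realType) (c' sigma r : nat).
Local Notation c := c'.+1.
Local Notation K := (key c sigma).
Local Notation TF := (tabfun c sigma r).
Local Notation n := ((2 ^ r)%:R : R).
Local Notation x := (((2 ^ r)%:R : R)^-1).
Local Notation Q m := ((1 - ((2 ^ r)%:R : R)^-1) ^+ m).
Local Notation w := (powR ((2 ^ r)%:R : R) (- (c%:R)^-1)).
Local Notation P Z := (PrZ R r (Z : {set K})).

Lemma NR_gt0 : 0 < #|TF|%:R :> R.
Proof. by rewrite ltr0n cardTF_gt0. Qed.

Lemma SS_le (Z : {set K}) : (SS r Z <= 2 ^ r * #|TF|)%N.
Proof.
rewrite mulnC -sum_constT; apply: leq_sum => T _; exact: img_le.
Qed.

Lemma SS_lem (Z : {set K}) : (SS r Z <= #|Z| * #|TF|)%N.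
Proof.
rewrite mulnC -sum_constT; apply: leq_sum => T _; exact: leq_imset_card.
Qed.

Lemma SS_mono (Y Z : {set K}) : Y \subset Z -> (SS r Y <= SS r Z)%N.
Proof.
move=> h; apply: leq_sum => T _; apply: subset_leq_card; exact: imsetS.
Qed.

Lemma P_ge0 (Z : {set K}) : 0 <= P Z.
Proof.
rewrite /PrZ subr_ge0 ler_pdivrMr ?mulr_gt0 ?n_gt0 ?NR_gt0 // mul1r -natrM ler_nat.
exact: SS_le.
Qed.

Lemma P_le1 (Z : {set K}) : P Z <= 1.
Proof.
by rewrite /PrZ lerBlDr lerDl divr_ge0 // ltW // mulr_gt0 ?n_gt0 ?NR_gt0.
Qed.

Lemma P_lowm (Z : {set K}) : 1 - #|Z|%:R * x <= P Z.
Proof.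
have h : (SS r Z)%:R <= #|Z|%:R * #|TF|%:R :> R by rewrite -natrM ler_nat SS_lem.
have hp : 0 < n * #|TF|%:R by rewrite mulr_gt0 ?n_gt0 ?NR_gt0.
have h2 : (SS r Z)%:R / (n * #|TF|%:R) <= #|Z|%:R * #|TF|%:R / (n * #|TF|%:R).
  by rewrite ler_pM2r // invr_gt0.
have e : #|Z|%:R * #|TF|%:R / (n * #|TF|%:R) = #|Z|%:R * x.
  by field; rewrite ?lt0r_neq0 ?n_gt0 ?NR_gt0.
rewrite /PrZ; lra.
Qed.

Lemma P_mono (Y Z : {set K}) : Y \subset Z -> P Z <= P Y.
Proof.
move=> h; rewrite /PrZ lerB // ler_pM2r ?invr_gt0 ?mulr_gt0 ?n_gt0 ?NR_gt0 //.
by rewrite ler_nat SS_mono.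
Qed.

Lemma exp_imageE (Z : {set K}) : exp_image R r Z = n * (1 - P Z).
Proof.
rewrite /exp_image /PrZ /SS /img -natr_sum.
have nz : n != 0 by rewrite lt0r_neq0 ?n_gt0.
have Nz : #|TF|%:R != 0 :> R by rewrite lt0r_neq0 ?NR_gt0.
move: (#|TF|%:R : R) Nz => N Nz.
move: (\sum_(T : TF) _)%N => s.
move: ((2 ^ r)%:R : R) nz => m nz.
field; by rewrite Nz nz.
Qed.

Lemma trivial_bound (Z : {set K}) : `|P Z - Q #|Z| | <= 2 * (1 - Q #|Z|).
Proof.
have P0 := P_ge0 Z; have P1 := P_le1 Z.
have Q0 := Q_ge0 R r #|Z|; have Q1 := Q_le1 R r #|Z|.
have PL := P_lowm Z.
case: (leqP #|Z| (2 ^ r)) => hm.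
  have QS := Q_small R hm.
  move: (P Z) (Q #|Z|) (#|Z|%:R * x) P0 P1 Q0 Q1 PL QS => p q y P0 P1 Q0 Q1 PL QS.
  rewrite ler_norml; apply/andP; split; lra.
have QH := Q_half R (ltnW hm).
move: (P Z) (Q #|Z|) P0 P1 Q0 Q1 QH => p q P0 P1 Q0 Q1 QH.
rewrite ler_norml; apply/andP; split; lra.
Qed.

End Main.



Lemma arith1 (R : realType) (p q s u W : R) : p * q <= W * q -> W * q <= s * q ->
  s * (q / 2) <= s * (1 - u) -> p * q <= 2 * s * (1 - u).
Proof. lra. Qed.

Lemma arith2 (R : realType) (p s u : R) : p <= s -> s / 2 <= s * (1 - u) -> p <= 2 * s * (1 - u).
Proof. lra. Qed.

Lemma half_le (R : realType) (u : R) : u <= 2^-1 -> 2^-1 <= 1 - u.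
Proof. lra. Qed.

Section KK.
Variables (R : realType) (c' sigma r : nat).
Local Notation c := c'.+1.
Local Notation K := (key c sigma).
Local Notation TF := (tabfun c sigma r).
Local Notation n := ((2 ^ r)%:R : R).
Local Notation x := (((2 ^ r)%:R : R)^-1).
Local Notation Q m := ((1 - ((2 ^ r)%:R : R)^-1) ^+ m).
Local Notation w := (powR ((2 ^ r)%:R : R) (- (c%:R)^-1)).
Local Notation P Z := (PrZ R r (Z : {set K})).
Local Notation t := ((r.+1)%:R : R).

Lemma nx_pow k : n ^+ k * x ^+ k = 1.
Proof. by rewrite -exprMn mulfV ?expr1n // lt0r_neq0 // n_gt0. Qed.

Lemma nn (u : R) : 0 <= u -> u \is Num.nneg. Proof. by rewrite nnegrE. Qed.

Lemma caseA1 (b m : nat) : (b ^ c <= m ^ c')%N -> (m <= 2 ^ r)%N ->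
  b%:R * x <= w.
Proof.
move=> hb hm.
have x0 := x_ge0 R r.
apply: (@pow_le R c'); [by rewrite mulr_ge0 | exact: ltW (w_gt0 R c' r) |].
rewrite (w_exp R c' r) exprMn.
have h1 : b%:R ^+ c <= m%:R ^+ c' :> R by rewrite -!natrX ler_nat.
have h2 : m%:R ^+ c' <= n ^+ c' :> R.
  by apply: lerXn2r; rewrite ?nn ?ler_nat.
have h3 : b%:R ^+ c * x ^+ c <= n ^+ c' * x ^+ c.
  by rewrite ler_wpM2r ?exprn_ge0 // (le_trans h1 h2).
apply: (le_trans h3); rewrite exprS mulrCA nx_pow mulr1.
by [].
Qed.

Lemma caseA2 (b m : nat) : (b ^ c <= m ^ c')%N -> (m <= 2 ^ r * r.+1)%N ->
  (b * m)%:R * x ^+ 2 <= t ^+ 2 * w.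
Proof.
move=> hb hm.
have x0 := x_ge0 R r.
have t1 := t_ge1 R r.
have t0 : 0 <= t by apply: le_trans t1.
apply: (@pow_le R c'); [by rewrite mulr_ge0 ?exprn_ge0 | by rewrite mulr_ge0 ?exprn_ge0 // ltW // w_gt0 |].
rewrite [in leRHS]exprMn (w_exp R c' r).
have h1 : ((b * m) ^ c <= (2 ^ r * r.+1) ^ (c' + c))%N.
  rewrite expnMn expnD; apply: leq_trans (leq_mul hb (leqnn _)) _.
  by rewrite -!expnD leq_expb.
have h1' : (b * m)%:R ^+ c <= n ^+ (c' + c) * t ^+ (c' + c) :> R.
  by rewrite -exprMn -natrM -!natrX ler_nat.
rewrite exprMn -exprM.
apply: (le_trans (ler_wpM2r (exprn_ge0 _ x0) h1')).
have e : (2 * c = (c' + c).+1)%N by rewrite mul2n -addnn addSn.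
rewrite e.
have e2 : n ^+ (c' + c) * t ^+ (c' + c) * x ^+ (c' + c).+1 = t ^+ (c' + c) * x.
  rewrite exprS; move: (n ^+ (c' + c)) (x ^+ (c' + c)) (nx_pow (c' + c)) => A B h.
  have -> : A * t ^+ (c' + c) * (x * B) = A * B * (t ^+ (c' + c) * x) by ring.
  by rewrite h mul1r.
rewrite e2 ler_wpM2r // -exprM.
apply: ler_weXn2l => //.
by rewrite e.
Qed.

Lemma caseB (b m : nat) : (2 ^ r < b)%N -> (b ^ c <= m ^ c')%N ->
  (m <= 2 ^ r * r.+1)%N -> 1 <= t ^+ 2 * w.
Proof.
move=> hb hbm hm.
have h := nat_caseB hb hbm hm.
have t1 := t_ge1 R r.
have t0 : 0 <= t by apply: le_trans t1.
have w0 := w_gt0 R c' r.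
have h1 : n <= t ^+ c.
  apply: (@le_trans _ _ (t ^+ c')); first by rewrite -natrX ler_nat ltnW.
  by apply: ler_weXn2l.
have tw : 1 <= t * w.
  apply: (@pow_le R c'); [by [] | by rewrite mulr_ge0 // ltW |].
  rewrite expr1n exprMn (w_exp R c' r).
  have e : n * x = 1 by rewrite mulfV // lt0r_neq0 // n_gt0.
  rewrite -[X in X <= _]e ler_wpM2r //; exact: x_ge0.
apply: le_trans tw _.
rewrite expr2 -mulrA ler_peMl //.
by rewrite mulr_ge0 // ltW.
Qed.

Lemma Kbound (Z : {set K}) : (#|Z| <= 2 ^ r * r.+1)%N ->
  `|P Z - Q #|Z| | <= 2 * (t ^+ 2 * w) * (1 - Q #|Z|).
Proof.
move=> hm.
set m := #|Z| in hm *.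
pose Pk := fun k => (k ^ c <= m ^ c')%N.
have exP : exists k, Pk k by exists 0%N; rewrite /Pk exp0n.
have ubP : forall k, Pk k -> (k <= m ^ c')%N.
  move=> k hk; apply: leq_trans hk; case: k => // k.
  by rewrite -{1}(expn1 k.+1) leq_pexp2l.
case: (ex_maxnP exP ubP) => b hb hmax.
have t1 := t_ge1 R r.
have t0 : 0 <= t by apply: le_trans t1.
have w0 := w_gt0 R c' r.
have x0 := x_ge0 R r.
have Q0 := Q_ge0 R r m; have Q1 := Q_le1 R r m.
have A0 : 0 <= t ^+ 2 * w by rewrite mulr_ge0 ?exprn_ge0 // ltW.
have wA : w <= t ^+ 2 * w by apply: ler_peMl; [exact: ltW | exact: exprn_ege1].
case: (leqP b (2 ^ r)) => hbn.
- have := @core R c sigma r (ltn0Sn c') b hbn Z (fun k hk => hmax k hk).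
  have e0 : (b * m)%:R / n ^+ 2 = (b%:R * x) * (m%:R * x).
    by rewrite natrM -exprVn expr2 mulrACA.
  rewrite -/m e0 => hc.
  apply: le_trans hc _.
  have mx0 : 0 <= m%:R * x by rewrite mulr_ge0.
  have bx0 : 0 <= b%:R * x by rewrite mulr_ge0.
  case: (leqP m (2 ^ r)) => hm2.
    have h1 := caseA1 hb hm2.
    have QS := Q_small R hm2.
    have h2 := ler_wpM2r mx0 h1.
    have h3 := ler_wpM2r mx0 wA.
    have h4 := ler_wpM2l A0 QS.
    apply: arith1 h2 h3 _.
    exact: h4.
  have h1 := caseA2 hb hm.
  have QH := Q_half R (ltnW hm2).
  have h4 : t ^+ 2 * w * 2^-1 <= t ^+ 2 * w * (1 - Q m) by rewrite ler_wpM2l // half_le.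
  have e : (b%:R * x) * (m%:R * x) = (b * m)%:R * x ^+ 2.
    by rewrite natrM expr2 mulrACA.
  rewrite e.
  exact: arith2 h1 h4.
- have h1 := caseB hbn hb hm.
  have := @trivial_bound R c' sigma r Z; rewrite -/m => h.
  apply: le_trans h _.
  rewrite -mulrA ler_wpM2l // -[leLHS]mul1r ler_wpM2r //.
  by rewrite subr_ge0.
Qed.

End KK.

Unset Implicit Arguments.


Lemma arith3 (R : realType) (P Q PY QY x w A : R) :
  0 <= P -> P <= PY -> Q <= QY -> QY <= x / 2 -> x <= w -> w <= A -> 0 <= A ->
  `|PY - QY| <= 2 * A * (1 - QY) -> 0 <= QY -> QY <= 1 -> 0 <= Q ->
  A / 2 <= A * (1 - Q) ->
  `|P - Q| <= 6 * A * (1 - Q).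
Proof.
move=> P0 PPY QQY QYx xw wA A0 KY QY0 QY1 Q0 hA.
have h : 2 * A * QY >= 0 by rewrite !mulr_ge0.
move: KY; rewrite !ler_norml => /andP [K1 K2].
apply/andP; split; nra.
Qed.

Lemma arith4 (R : realType) (n D a b : R) : 0 < n -> 0 < D ->
  `|a| <= b * D -> `|n * a| / (n * D) <= b.
Proof.
move=> n0 D0 h; rewrite ler_pdivrMr ?mulr_gt0 // normrM gtr0_norm //.
have := ler_wpM2l (ltW n0) h.
lra.
Qed.

Lemma arith5 (R : realType) (A u : R) : 0 <= A -> 0 <= u -> 2 * A * u <= 6 * A * u.
Proof. move=> A0 u0; have := mulr_ge0 A0 u0; nra. Qed.

Theorem corollary1 (R : realType) (c : nat) (hc : (0 < c)%N) :
  exists C : R, exists k : nat, 0 < C /\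
    forall (sigma r : nat) (X : {set key c sigma}), (0 < #|X|)%N ->
      `|exp_image R r X - mu0 R (2 ^ r) #|X| | / mu0 R (2 ^ r) #|X|
        <= C * (r.+1)%:R ^+ k * powR ((2 ^ r)%:R) (- (c%:R)^-1).
Proof.
case: c hc => // c' _.
exists 6, 2%N; split => // sigma r X hX.
rewrite exp_imageE /mu0.
set n : R := (2 ^ r)%:R.
set Q := (1 - n^-1) ^+ #|X|.
set P := PrZ R r X.
set w := powR n (- (c'.+1%:R)^-1).
set t : R := (r.+1)%:R.
have n0 : 0 < n by exact: n_gt0.
have x0 : 0 <= n^-1 by rewrite invr_ge0 ltW.
have Q0 : 0 <= Q := Q_ge0 R r #|X|.
have Qlt1 : Q < 1.
  rewrite /Q exprn_ilt1 ?subr_ge0 ?x_le1 // ?gtrBl ?invr_gt0 //.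
  by rewrite -lt0n.
have t1 : 1 <= t by exact: t_ge1.
have w0 : 0 < w by exact: w_gt0.
have A0 : 0 <= t ^+ 2 * w by rewrite mulr_ge0 ?exprn_ge0 ?ltW // (le_trans _ t1).
have wA : w <= t ^+ 2 * w by apply: ler_peMl; [exact: ltW | exact: exprn_ege1].
have hkey : `|P - Q| <= 6 * (t ^+ 2 * w) * (1 - Q).
  case: (leqP #|X| (2 ^ r * r.+1)) => hm.
    apply: le_trans (@Kbound R c' sigma r X hm) _.
    by apply: arith5 => //; rewrite subr_ge0 ltW.
  have [Y hYX hY] : exists2 Y : {set key c'.+1 sigma}, Y \subset X & #|Y| = (2 ^ r * r.+1)%N.
    exists [set z in take (2 ^ r * r.+1) (enum X)].
      apply/subsetP => z; rewrite inE => /mem_take; by rewrite mem_enum.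
    rewrite cardsE.
    move/card_uniqP: (take_uniq (2 ^ r * r.+1) (enum_uniq (mem X))) => ->.
    by rewrite size_take -cardE hm.
  have KY := @Kbound R c' sigma r Y (eq_leq hY).
  rewrite hY in KY.
  apply: (@arith3 R P Q (PrZ R r Y) ((1 - n^-1) ^+ (2 ^ r * r.+1)) (n^-1) w (t ^+ 2 * w)) => //.
  - exact: P_ge0.
  - exact: P_mono.
  - exact: Q_mono (ltnW hm).
  - exact: Q_big.
  - exact: x_le_w.
  - exact: Q_ge0.
  - exact: Q_le1.
  - have hh : 2^-1 <= 1 - Q.
      apply: half_le; apply: Q_half.
      apply: leq_trans (ltnW hm); by rewrite leq_pmulr.
    have := ler_wpM2l A0 hh.
    by [].
rewrite -mulrBr (_ : (1 - P) - (1 - Q) = Q - P); last by ring.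
apply: arith4 => //; first by rewrite subr_gt0.
by rewrite distrC; rewrite mulrA in hkey.
Qed.
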